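(* Let $0<\beta\le1$ and let $x$ be real with $0\le\frac{(1+\beta)^2x}{4\beta}<1$. Then $$\lim_{t\to\infty}{}_3F_2\!\left(\begin{matrix}1,\ t\frac{1+\beta}{2}+1,\ t\frac{1+\beta}{2}+\frac12\\ t+1,\ t\beta+1\end{matrix};x\right)=\frac{1}{1-\frac{(1+\beta)^2x}{4\beta}},$$ uniformly on compact subsets of this region.
   Context: ${}_3F_2\!\left(\begin{matrix}a,b,c\\ d,e\end{matrix};x\right)=\sum_{n\ge0}\frac{(a)_n(b)_n(c)_n}{(d)_n(e)_n}\frac{x^n}{n!}$ for $|x|<1$, with $(q)_0=1$, $(q)_n=q(q+1)\cdots(q+n-1)$; $t>0$ is a real parameter tending to $\infty$. *)

(* Defs.v *)
From HB Require Import structures.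
From mathcomp Require Import all_boot all_order all_algebra.
From mathcomp Require Import all_classical all_reals all_analysis.
Set Implicit Arguments. Unset Strict Implicit. Unset Printing Implicit Defensive.
Import Order.TTheory GRing.Theory Num.Theory.
Import numFieldNormedType.Exports.
Local Open Scope ring_scope.

Definition poch {R : realType} (q : R) (n : nat) : R :=
  \prod_(i < n) (q + i%:R).

Definition hyp3F2_term {R : realType} (a b c d e x : R) (n : nat) : R :=
  (poch a n * poch b n * poch c n) / (poch d n * poch e n) * x ^+ n / (n`!)%:R.

Definition hyp3F2 {R : realType} (a b c d e x : R) : R :=
  limn (series (hyp3F2_term a b c d e x)).

(* Main.v *)
Require Import Defs.
From HB Require Import structures.
From mathcomp Require Import all_boot all_order all_algebra.
From mathcomp Require Import all_classical all_reals all_analysis.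
From mathcomp Require Import ring lra.
Import Order.TTheory GRing.Theory Num.Theory.
Import numFieldNormedType.Exports.
Local Open Scope classical_set_scope.
Local Open Scope ring_scope.
Lemma termS (R : realType) (b c d e x : R) n :
  (forall i : nat, 0 < d + i%:R) -> (forall i : nat, 0 < e + i%:R) ->
  hyp3F2_term 1 b c d e x n.+1 = hyp3F2_term 1 b c d e x n *
    ((b + n%:R) * (c + n%:R) / ((d + n%:R) * (e + n%:R)) * x).
Proof.
move=> hd he.
have pd : 0 < poch d n by apply: prodr_gt0 => i _.
have pe : 0 < poch e n by apply: prodr_gt0 => i _.
have f0 : 0 < (n`!)%:R :> R by rewrite ltr0n fact_gt0.
rewrite /hyp3F2_term /poch !big_ord_recr /= factS natrM exprS.
rewrite -/(poch 1 n) -/(poch b n) -/(poch c n) -/(poch d n) -/(poch e n).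
have -> : (n.+1)%:R = 1 + n%:R :> R by rewrite -add1n natrD.
have n1 : 0 < 1 + n%:R :> R by apply: ltr_wpDr => //.
field.
by rewrite (gt_eqF (hd n)) (gt_eqF (he n)) (gt_eqF f0) (gt_eqF pd) (gt_eqF pe) (gt_eqF n1).
Qed.

Lemma term0 (R : realType) (b c d e x : R) : hyp3F2_term 1 b c d e x 0 = 1.
Proof. by rewrite /hyp3F2_term /poch !big_ord0 expr0 fact0 !mulr1 invr1 !mulr1. Qed.
Lemma fle (R : realType) (be t m x : R) : 0 < be -> be <= 1 -> 0 < t -> 0 <= m -> 0 <= x ->
  (t * ((1 + be) / 2) + 1 + m) * (t * ((1 + be) / 2) + 2^-1 + m) /
    ((t + 1 + m) * (t * be + 1 + m)) * x <= (1 + be) ^+ 2 * x / (4 * be).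
Proof.
move=> b0 b1 t0 m0 x0.
have D0 : 0 < (t + 1 + m) * (t * be + 1 + m) by apply: mulr_gt0; nra.
have -> : (1 + be) ^+ 2 * x / (4 * be) = (1 + be) ^+ 2 / (4 * be) * x by rewrite mulrAC.
apply: ler_wpM2r => //.
rewrite ler_pdivrMr // mulrAC ler_pdivlMr ?mulr_gt0 //.
set s := 1 + m.
have E : (1 + be) ^+ 2 * ((t + 1 + m) * (t * be + 1 + m)) -
  (t * ((1 + be) / 2) + 1 + m) * (t * ((1 + be) / 2) + 2^-1 + m) * (4 * be)
  = (1 - be)^+2 * (t * s * (1 + be) + s^+2) + 2 * be * (t * ((1+be)/2) + s).
  by rewrite /s; field.
rewrite -subr_ge0 E.
apply: addr_ge0; first apply: mulr_ge0; rewrite ?exprn_ge0 //; rewrite /s; nra.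
Qed.
Lemma fbound (R : realType) (bb be t m x Nr : R) : 0 < bb -> bb <= be -> be <= 1 -> 1 <= t ->
  0 <= m -> 1 + m <= Nr -> 0 <= x -> (1 + be) ^+ 2 * x / (4 * be) <= 1 ->
  (1 + be) ^+ 2 * x / (4 * be) -
  (t * ((1 + be) / 2) + 1 + m) * (t * ((1 + be) / 2) + 2^-1 + m) /
    ((t + 1 + m) * (t * be + 1 + m)) * x <= (Nr + Nr / bb + Nr ^+ 2 / bb) / t.
Proof.
move=> bb0 bbe b1 t1 m0 mN x0 z1.
have b0 : 0 < be by apply: (lt_le_trans bb0 bbe).
have t0 : 0 < t by apply: (lt_le_trans ltr01 t1).
set s := 1 + m.
have s1 : 1 <= s by rewrite /s; lra.
set P := (t + s) * (t * be + s).
have EP : (t + 1 + m) * (t * be + 1 + m) = P by rewrite /P /s; ring.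
rewrite EP.
have P0 : 0 < P by rewrite /P; apply: mulr_gt0; nra.
have tb0 : 0 < t ^+ 2 * be by apply: mulr_gt0; rewrite ?exprn_gt0.
have PD : P - t ^+ 2 * be = t * s * be + t * s + s ^+ 2 by rewrite /P; ring.
set z := (1 + be) ^+ 2 * x / (4 * be).
have z0 : 0 <= z by rewrite /z; apply: divr_ge0; nra.
have fge : t ^+ 2 * (1 + be) ^+ 2 / (4 * P) <=
   (t * ((1 + be) / 2) + 1 + m) * (t * ((1 + be) / 2) + 2^-1 + m) / P.
  have h1 : 0 <= t * ((1 + be) / 2) by nra.
  have key : t ^+ 2 * (1 + be) ^+ 2 / 4 <= (t * ((1 + be) / 2) + 1 + m) * (t * ((1 + be) / 2) + 2^-1 + m).
    nra.
  rewrite invfM [X in X <= _]mulrA. apply: ler_wpM2r => //. by rewrite invr_ge0 ltW.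
have step1 : z - (t * ((1 + be) / 2) + 1 + m) * (t * ((1 + be) / 2) + 2^-1 + m) / P * x
   <= z * (1 - t ^+ 2 * be / P).
  have -> : z * (1 - t ^+ 2 * be / P) = z - t ^+ 2 * (1 + be) ^+ 2 / (4 * P) * x.
    by rewrite /z; field; apply/andP; split; apply: lt0r_neq0.
  by rewrite lerD2l lerN2 ler_wpM2r.
apply: (le_trans step1).
have q0 : 0 <= 1 - t ^+ 2 * be / P.
  rewrite subr_ge0 ler_pdivrMr // mul1r -subr_ge0 PD; nra.
apply: (le_trans (ler_piMl q0 z1)).
have -> : 1 - t ^+ 2 * be / P = (P - t ^+ 2 * be) / P.
  by field; exact: lt0r_neq0.
rewrite PD.
have Pge : t ^+ 2 * be <= P by rewrite -subr_ge0 PD; nra.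
apply: (le_trans (y := (t * s * be + t * s + s ^+ 2) / (t ^+ 2 * be))).
  rewrite ler_pdivrMr // [X in _ <= X]mulrAC ler_pdivlMr //.
  apply: ler_wpM2l => //. nra.
have -> : (t * s * be + t * s + s ^+ 2) / (t ^+ 2 * be) = (s + s / be + s ^+ 2 / (t * be)) / t.
  field; apply/andP; split; apply: lt0r_neq0 => //.
rewrite ler_pM2r ?invr_gt0 //.
apply: lerD; first apply: lerD => //.
  apply: (le_trans (y := Nr / be)); first by rewrite ler_pM2r ?invr_gt0.
  apply: ler_wpM2l; first lra. by rewrite lef_pV2 ?posrE.
apply: (le_trans (y := Nr ^+ 2 / be)).
  rewrite ler_pdivrMr; last by apply: mulr_gt0.
  rewrite [X in _ <= X]mulrAC ler_pdivlMr //.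
  have h : s ^+ 2 <= Nr ^+ 2 by rewrite /s; nra.
  have h2 : 0 <= Nr ^+ 2 * be * (t - 1) by apply: mulr_ge0; [apply: mulr_ge0; nra| lra].
  nra.
apply: ler_wpM2l; first nra. by rewrite lef_pV2 ?posrE.
Qed.

Lemma geom (R : realType) (z : R) n : z < 1 ->
  \sum_(0 <= k < n) z ^+ k = (1 - z ^+ n) / (1 - z).
Proof.
move=> z1.
have z0 : 1 - z != 0 by rewrite subr_eq0 eq_sym lt_eqF.
apply: (mulIf z0); rewrite divfK //.
rewrite big_mkord.
have := subrX1 z n.
move=> E. rewrite mulrC.
have -> : 1 - z ^+ n = - (z ^+ n - 1) by rewrite opprB.
rewrite E. ring.
Qed.

Lemma main_est (R : realType) (bb q : R) (N : nat) (t be x : R) :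
  0 < bb -> bb <= be -> be <= 1 -> 1 <= t ->
  0 <= (1 + be) ^+ 2 * x / (4 * be) ->
  (1 + be) ^+ 2 * x / (4 * be) <= q -> q < 1 ->
  `| hyp3F2 1 (t * ((1 + be) / 2) + 1) (t * ((1 + be) / 2) + 2^-1)
              (t + 1) (t * be + 1) x
       - (1 - (1 + be) ^+ 2 * x / (4 * be))^-1 |
  <= q ^+ N / (1 - q) + N%:R ^+ 2 * (N%:R + N%:R / bb + N%:R ^+ 2 / bb) / t.
Proof.
move=> bb0 bbe b1 t1 z0 zq q1.
set z := (1 + be) ^+ 2 * x / (4 * be).
set C := (N%:R + N%:R / bb + N%:R ^+ 2 / bb).
set a := hyp3F2_term 1 (t * ((1 + be) / 2) + 1) (t * ((1 + be) / 2) + 2^-1)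
              (t + 1) (t * be + 1) x.
have b0 : 0 < be by apply: (lt_le_trans bb0 bbe).
have t0 : 0 < t by apply: (lt_le_trans ltr01 t1).
have z1 : z < 1 by apply: (le_lt_trans zq q1).
have x0 : 0 <= x.
  have -> : x = z * (4 * be) / (1 + be) ^+ 2.
    rewrite /z; field; apply/andP; split; apply: lt0r_neq0; nra.
  apply: divr_ge0; [apply: mulr_ge0 => //; lra | apply: exprn_ge0; lra].
set F := fun n : nat => (t * ((1 + be) / 2) + 1 + n%:R) * (t * ((1 + be) / 2) + 2^-1 + n%:R) /
    ((t + 1 + n%:R) * (t * be + 1 + n%:R)) * x.
have aS n : a n.+1 = a n * F n.
  by rewrite /a termS // => i; have : 0 <= i%:R :> R by []; nra.
have F0 n : 0 <= F n.
  rewrite /F; apply: mulr_ge0 => //; apply: divr_ge0; apply: mulr_ge0;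
    have : 0 <= n%:R :> R by []; nra.
have Fz n : F n <= z by apply: fle => //; lra.
have aub n : 0 <= a n <= z ^+ n.
  elim: n => [|n IH]; first by rewrite /a term0 expr0 lexx ler01.
  rewrite aS exprSr; case/andP: IH => IH1 IH2; apply/andP; split.
    exact: mulr_ge0.
  apply: ler_pM => //.
have zn1 n : z ^+ n <= 1 by apply: exprn_ile1 => //; lra.
have adiff n : (n <= N)%N -> z ^+ n - a n <= n%:R * C / t.
  elim: n => [|n IH] nN; first by rewrite /a term0 expr0 subrr mul0r mul0r.
  have IH' := IH (ltnW nN).
  have hF : z - F n <= C / t.
    apply: fbound => //; last exact: ltW z1.
    by rewrite addrC natr1 ler_nat.
  have e1 : z ^+ n.+1 - a n.+1 = (z ^+ n - a n) * F n + z ^+ n * (z - F n).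
    by rewrite aS exprSr; ring.
  rewrite e1.
  have g1 : 0 <= z ^+ n - a n by case/andP: (aub n) => _ h; lra.
  have h1 : (z ^+ n - a n) * F n <= z ^+ n - a n.
    apply: ler_piMr => //; apply: (le_trans (Fz n)); lra.
  have h2 : z ^+ n * (z - F n) <= C / t.
    apply: (le_trans _ hF); apply: ler_piMl; [have := Fz n; lra| exact: zn1].
  have -> : n.+1%:R * C / t = n%:R * C / t + C / t.
    by rewrite -natr1; field; exact: lt0r_neq0.
  lra.
have ser n : series a n = \sum_(0 <= k < n) a k by [].
have sub n : series a n <= (1 - z)^-1.
  rewrite ser; apply: (le_trans (y := \sum_(0 <= k < n) z ^+ k)).
    by apply: ler_sum_nat => i _; case/andP: (aub i).
  rewrite geom // -[X in _ <= X]mul1r; apply: ler_wpM2r; first by rewrite invr_ge0; lra.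
  have : 0 <= z ^+ n by apply: exprn_ge0. lra.
have nd : nondecreasing_seq (series a).
  move=> m n mn; rewrite !ser.
  by apply: (nondecreasing_series (P := xpredT)) => // k _ _; case/andP: (aub k).
have cv : cvgn (series a).
  apply: nondecreasing_is_cvgn => //.
  by exists (1 - z)^-1 => _ [n _ <-].
have SG : hyp3F2 1 (t * ((1 + be) / 2) + 1) (t * ((1 + be) / 2) + 2^-1)
              (t + 1) (t * be + 1) x <= (1 - z)^-1.
  rewrite /hyp3F2 -/a; apply: limr_le => //; exact: nearW.
have SN := nondecreasing_cvgn_le nd cv N.
rewrite -/z ler0_norm ?subr_le0 // opprB.
rewrite /hyp3F2 -/a.
apply: (le_trans (y := (1 - z)^-1 - series a N)); first by rewrite lerB.
have -> : (1 - z)^-1 - series a N = z ^+ N / (1 - z) + \sum_(0 <= k < N) (z ^+ k - a k).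
  rewrite sumrB geom // ser. field. by rewrite subr_eq0 eq_sym lt_eqF.
apply: lerD.
  apply: ler_pM; [apply: exprn_ge0 => //| rewrite invr_ge0; lra| |].
    apply: lerXn2r => //; rewrite ?nnegrE //; lra.
  rewrite lef_pV2 ?posrE ?subr_gt0 //; move: zq; rewrite -/z; lra.
apply: (le_trans (y := \sum_(0 <= k < N) (N%:R * C / t))).
  apply: ler_sum_nat => i /andP [_ iN].
  apply: (le_trans (adiff i (ltnW iN))).
  have C0 : 0 <= C.
    have hN : 0 <= N%:R :> R by []. have hb : 0 <= bb^-1 by rewrite invr_ge0; lra.
    rewrite /C; apply: addr_ge0; [apply: addr_ge0 => //|]; apply: mulr_ge0 => //; apply: exprn_ge0 => //.
  apply: ler_wpM2r; first by rewrite invr_ge0; lra.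
  apply: ler_wpM2r => //. rewrite ler_nat; exact: ltnW.
rewrite sumr_const_nat subn0 le_eqVlt; apply/orP; left; apply/eqP; rewrite expr2 -[in LHS]mulr_natr; field; exact: lt0r_neq0.
Qed.

Lemma cont1 (R : realType) : continuous (fun p : R * R => p.1).
Proof. move=> p. exact: cvg_fst. Qed.
Lemma cont2 (R : realType) : continuous (fun p : R * R => (1 + p.1) * (1 + p.1) * p.2 - 4 * p.1).
Proof. move=> p.
apply: cvgB; last by apply: cvgMl_tmp; exact: cvg_fst.
apply: cvgM; last exact: cvg_snd.
apply: cvgM; apply: cvgD; (exact: cvg_cst || exact: cvg_fst).
Qed.

Theorem corollary1 (R : realType) (K : set (R * R)) :
  compact K ->
  K `<=` [set p : R * R | 0 < p.1 <= 1 /\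
           0 <= (1 + p.1) ^+ 2 * p.2 / (4 * p.1) < 1] ->
  forall eps : R, 0 < eps ->
  exists T : R, 0 < T /\ forall t : R, T < t -> forall p : R * R, K p ->
    `| hyp3F2 1 (t * ((1 + p.1) / 2) + 1) (t * ((1 + p.1) / 2) + 2^-1)
              (t + 1) (t * p.1 + 1) p.2
       - (1 - (1 + p.1) ^+ 2 * p.2 / (4 * p.1))^-1 | < eps.
Proof.
move=> cK sK eps e0.
have [K0|K0] := pselect (K !=set0); last first.
  exists 1; split => // t _ p Kp; exfalso; apply: K0; by exists p.
have [c1 c1K c1min] := compact_EVT_min K0 cK (continuous_subspaceT (@cont1 R)).
have [c2 c2K c2max] := compact_EVT_max K0 cK (continuous_subspaceT (@cont2 R)).
move/set_mem: c1K => c1K; move/set_mem: c2K => c2K.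
set bb := c1.1.
have bb0 : 0 < bb by have [/andP[h _] _] := sK _ c1K.
set hm := (1 + c2.1) * (1 + c2.1) * c2.2 - 4 * c2.1.
have hm0 : hm < 0.
  have [/andP[h1 h2] /andP[h3 h4]] := sK _ c2K.
  move: h4; rewrite ltr_pdivrMr ?mulr_gt0 // mul1r /hm expr2; lra.
set q := 1 + hm / 4.
have q1 : q < 1 by rewrite /q; lra.
have zq : forall p, K p -> (1 + p.1) ^+ 2 * p.2 / (4 * p.1) <= q.
  move=> p Kp; have [/andP[h1 h2] _] := sK _ Kp.
  have hp := c2max _ (mem_set Kp); rewrite /= -/hm in hp.
  rewrite ler_pdivrMr ?mulr_gt0 // /q expr2.
  have : hm * p.1 >= hm by nra.
  lra.
set e2 := eps * (1 - q) / 2.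
have e20 : 0 < e2 by rewrite /e2; apply: divr_gt0 => //; apply: mulr_gt0 => //; lra.
have qabs : `|q| < 1.
  have [_ /andP[h3 _]] := sK _ c2K.
  have := zq _ c2K => h. rewrite ger0_norm //; lra.
have [N _ HN] := cvgr0_norm_lt _ (cvg_expr qabs) _ e20.
have := HN N (leqnn N) => /= qN.
set Nr := N%:R : R.
set C := Nr + Nr / bb + Nr ^+ 2 / bb.
have C0 : 0 <= C.
  have hN : 0 <= Nr by []. have hb : 0 <= bb^-1 by rewrite invr_ge0; lra.
  rewrite /C; apply: addr_ge0; [apply: addr_ge0 => //|]; apply: mulr_ge0 => //; apply: exprn_ge0 => //.
have NC0 : 0 <= Nr ^+ 2 * C by apply: mulr_ge0 => //; apply: exprn_ge0.
exists (1 + 2 * (Nr ^+ 2 * C) / eps); split.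
  have : 0 <= 2 * (Nr ^+ 2 * C) / eps by apply: divr_ge0; [apply: mulr_ge0|lra].
  lra.
move=> t Tt p Kp.
have [/andP[h1 h2] /andP[h3 h4]] := sK _ Kp.
have tge : 2 * (Nr ^+ 2 * C) / eps < t - 1 by lra.
have t1 : 1 <= t.
  have : 0 <= 2 * (Nr ^+ 2 * C) / eps by apply: divr_ge0; [apply: mulr_ge0|lra].
  lra.
have t0 : 0 < t by lra.
have bbp : bb <= p.1 by exact: (c1min _ (mem_set Kp)).
have := @main_est R bb q N t p.1 p.2 bb0 bbp h2 t1 h3 (zq _ Kp) q1.
rewrite -/Nr -/C => H.
apply: (le_lt_trans H).
have P1 : q ^+ N / (1 - q) < eps / 2.
  rewrite ltr_pdivrMr ?subr_gt0 //.
  have : `|q ^+ N| < e2 by []. rewrite /e2 => h.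
  apply: (le_lt_trans (ler_norm _)). rewrite mulrAC in h. exact: h.
have P2 : Nr ^+ 2 * C / t < eps / 2.
  rewrite ltr_pdivrMr //.
  move: tge; rewrite ltr_pdivrMr // => tge.
  nra.
lra.
Qed.
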